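(* Let $(x,y)$ and $(x',y')$ be $\mathbf{x}$-vertices of $R$. If $ax'\in\operatorname{Band}_{\mathbf{x}}(y)$, then \[ d_R((x,y),(x',y'))\le d(P_A)+2d(\bar A)+d(\bar B)+2. \]
   Context: Let $A\in\mathbb{R}^{m_1\times n_1}$, nonzero $a\in\mathbb{R}^{1\times n_1}$, nonzero $b\in\mathbb{R}^{1\times n_2}$, $B\in\mathbb{R}^{m_2\times n_2}$, $c_A\in\mathbb{R}^{m_1}$, $c_B\in\mathbb{R}^{m_2}$, $c_a,c_b\in\mathbb{R}$, and $R=\{(x,y)\in\mathbb{R}^{n_1}\times\mathbb{R}^{n_2}: Ax=c_A,\ ax+by=c_a+c_b,\ By=c_B,\ x,y\ge 0\}$. Assume $R$ is simple (nondegenerate). Let $P_A=\{x: Ax=c_A, x\ge 0\}$, $\bar A=\begin{bmatrix}A\\ a\end{bmatrix}$, $\bar B=\begin{bmatrix}b\\ B\end{bmatrix}$. A vertex $(x,y)$ of $R$ is an $\mathbf{x}$-vertex if $x$ is a vertex of $P_A$; for such a vertex, $\operatorname{Band}_{\mathbf{x}}(y):=\{c_a+c_b-bz : Bz=c_B,\ \operatorname{supp}(z)\subseteq\operatorname{supp}(y),\ z\ge 0\}$, where $\operatorname{supp}$ is the set of indices of nonzero coordinates. $d_R(v,w)$ is the minimum number of edges of an edge walk in $R$ from $v$ to $w$. For a polyhedron $P$, $d(P)$ is its combinatorial diameter, and for a matrix $M\in\mathbb{R}^{m\times n}$, $d(M):=\max\{d(\{z: Mz=r, z\ge 0\}): r\in\mathbb{R}^m\}$.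 *)

(* Defs.v *)
From HB Require Import structures.
From mathcomp Require Import all_boot all_order all_algebra.
Set Implicit Arguments. Unset Strict Implicit. Unset Printing Implicit Defensive.
Import Order.TTheory GRing.Theory Num.Theory.
Local Open Scope ring_scope.

Section Polyhedra.
Variable R : realFieldType.

Definition polyhedron (m n : nat) (M : 'M[R]_(m, n)) (r : 'cV[R]_m) (z : 'cV[R]_n) : Prop :=
  M *m z = r /\ forall i, 0 <= z i 0.

Definition is_vertex (n : nat) (P : 'cV[R]_n -> Prop) (v : 'cV[R]_n) : Prop :=
  P v /\ forall d : 'cV[R]_n, P (v + d) -> P (v - d) -> d = 0.

Definition segment (n : nat) (v w z : 'cV[R]_n) : Prop :=
  exists t : R, 0 <= t /\ t <= 1 /\ z = t *: v + (1 - t) *: w.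

(* v,w are joined by an edge: [v,w] is a one-dimensional (exposed) face of P. *)
Definition is_edge (n : nat) (P : 'cV[R]_n -> Prop) (v w : 'cV[R]_n) : Prop :=
  is_vertex P v /\ is_vertex P w /\ v <> w /\
  exists c : 'rV[R]_n,
    (forall z, P z -> (c *m z) 0 0 <= (c *m v) 0 0) /\
    (forall z, (P z /\ (c *m z) 0 0 = (c *m v) 0 0) <-> segment v w z).

Fixpoint dist_le (n : nat) (P : 'cV[R]_n -> Prop) (k : nat) (v w : 'cV[R]_n) : Prop :=
  match k with
  | O => v = w
  | S k' => v = w \/ exists u, is_edge P v u /\ dist_le P k' u w
  end.

Definition diam_le (n : nat) (P : 'cV[R]_n -> Prop) (D : nat) : Prop :=
  forall v w, is_vertex P v -> is_vertex P w -> dist_le P D v w.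

(* d(M) <= D, with d(M) = max_r d({z : M z = r, z >= 0}) *)
Definition mat_diam_le (m n : nat) (M : 'M[R]_(m, n)) (D : nat) : Prop :=
  forall r : 'cV[R]_m, diam_le (polyhedron M r) D.

Definition std_nondegenerate (m n : nat) (M : 'M[R]_(m, n)) (r : 'cV[R]_m) : Prop :=
  forall v, is_vertex (polyhedron M r) v -> #|[set i | v i 0 != 0]| = \rank M.

(* Constraint matrix and right-hand side of R, in the variables col_mx x y. *)
Definition RM (m1 n1 m2 n2 : nat) (A : 'M[R]_(m1, n1)) (a : 'rV[R]_n1)
  (b : 'rV[R]_n2) (B : 'M[R]_(m2, n2)) : 'M[R]_(m1 + (1 + m2), n1 + n2) :=
  col_mx (row_mx A 0) (col_mx (row_mx a b) (row_mx 0 B)).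

Definition Rr (m1 m2 : nat) (cA : 'cV[R]_m1) (cB : 'cV[R]_m2) (ca cb : R)
  : 'cV[R]_(m1 + (1 + m2)) :=
  col_mx cA (col_mx (ca + cb)%:M cB).

Definition x_vertex (m1 n1 m2 n2 : nat) (A : 'M[R]_(m1, n1)) (a : 'rV[R]_n1)
  (b : 'rV[R]_n2) (B : 'M[R]_(m2, n2)) (cA : 'cV[R]_m1) (cB : 'cV[R]_m2) (ca cb : R)
  (x : 'cV[R]_n1) (y : 'cV[R]_n2) : Prop :=
  is_vertex (polyhedron (RM A a b B) (Rr cA cB ca cb)) (col_mx x y) /\
  is_vertex (polyhedron A cA) x.

Definition in_band (m2 n2 : nat) (b : 'rV[R]_n2) (B : 'M[R]_(m2, n2))
  (cB : 'cV[R]_m2) (ca cb : R) (y : 'cV[R]_n2) (t : R) : Prop :=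
  exists z : 'cV[R]_n2,
    [/\ B *m z = cB, (forall i, 0 <= z i 0),
        (forall i, z i 0 != 0 -> y i 0 != 0) &
        t = ca + cb - (b *m z) 0 0].

End Polyhedra.

(* Main.v *)
Require Import Defs.
From HB Require Import structures.
From mathcomp Require Import all_boot all_order all_algebra.
From mathcomp Require Import ring lra.
From Stdlib Require Import Classical.
From mathcomp Require Import zify.
Import Order.TTheory GRing.Theory Num.Theory.
Local Open Scope ring_scope.
Set Implicit Arguments. Unset Strict Implicit. Unset Printing Implicit Defensive.

Section Gen.
Variable R : realFieldType.

Lemma scD n (c : 'rV[R]_n) (u v : 'cV[R]_n) :
  (c *m (u + v)) 0 0 = (c *m u) 0 0 + (c *m v) 0 0.
Proof. by rewrite mulmxDr [LHS]mxE. Qed.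
Lemma scZ n (c : 'rV[R]_n) (v : 'cV[R]_n) s :
  (c *m (s *: v)) 0 0 = s * (c *m v) 0 0.
Proof. by rewrite -scalemxAr [LHS]mxE. Qed.
Lemma scN n (c : 'rV[R]_n) (v : 'cV[R]_n) :
  (c *m (- v)) 0 0 = - (c *m v) 0 0.
Proof. by rewrite mulmxN [LHS]mxE. Qed.
Lemma scB n (c : 'rV[R]_n) (u v : 'cV[R]_n) :
  (c *m (u - v)) 0 0 = (c *m u) 0 0 - (c *m v) 0 0.
Proof. by rewrite scD scN. Qed.
Lemma sc0 n (c : 'rV[R]_n) : (c *m (0 : 'cV[R]_n)) 0 0 = 0.
Proof. by rewrite mulmx0 mxE. Qed.

Lemma eps_ok n (m d : 'cV[R]_n) : (forall i, 0 <= m i 0) ->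
  (forall i, m i 0 = 0 -> d i 0 = 0) ->
  exists2 e : R, 0 < e & forall i, 0 <= m i 0 + e * d i 0 /\ 0 <= m i 0 - e * d i 0.
Proof.
move=> hm hd.
set S := \sum_(i | m i 0 != 0) `|d i 0| / m i 0.
have S0 : 0 <= S by apply: sumr_ge0 => i _; exact: divr_ge0 (normr_ge0 _) (hm _).
have HS i : m i 0 != 0 -> `|d i 0| / m i 0 <= S.
  move=> h; rewrite /S (bigD1 i) //= lerDl; apply: sumr_ge0 => j _; exact: divr_ge0 (normr_ge0 _) (hm _).
have S1 : 0 < 1 + S by lra.
exists ((1 + S)^-1); first by rewrite invr_gt0.
move=> i.
have [mi0|mi0] := eqVneq (m i 0) 0.
  by rewrite (hd _ mi0) mi0 mulr0 addr0 subr0.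
have mpos : 0 < m i 0 by rewrite lt_def mi0 hm.
have h1 : `|d i 0| <= S * m i 0 by rewrite -ler_pdivrMr // HS.
have h2 : (1 + S)^-1 * `|d i 0| <= m i 0.
  rewrite mulrC ler_pdivrMr //; nra.
have h3 : `|(1 + S)^-1 * d i 0| = (1 + S)^-1 * `|d i 0|.
  by rewrite normrM gtr0_norm // invr_gt0.
have h4 := ler_norm ((1 + S)^-1 * d i 0).
have h5 := ler_norm (- ((1 + S)^-1 * d i 0)).
rewrite normrN in h5.
split; lra.
Qed.

Lemma vertex_kernel m n (M : 'M[R]_(m, n)) r z :
  is_vertex (polyhedron M r) z -> forall e : 'cV[R]_n, M *m e = 0 ->
  (forall i, z i 0 = 0 -> e i 0 = 0) -> e = 0.
Proof.
move=> [[hMz hz] hv] e he hs.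
have [eps ep H] := eps_ok hz hs.
have : eps *: e = 0.
  apply: hv; split.
  - by rewrite mulmxDr -scalemxAr he scaler0 addr0.
  - by move=> i; rewrite !mxE; exact: (H i).1.
  - by rewrite mulmxBr -scalemxAr he scaler0 subr0.
  - by move=> i; rewrite !mxE; exact: (H i).2.
by move/eqP; rewrite scaler_eq0 gt_eqF //= => /eqP.
Qed.

Lemma kernel_vertex m n (M : 'M[R]_(m, n)) r z :
  polyhedron M r z -> (forall e : 'cV[R]_n, M *m e = 0 ->
  (forall i, z i 0 = 0 -> e i 0 = 0) -> e = 0) -> is_vertex (polyhedron M r) z.
Proof.
move=> hz hk; split=> // d [h1 h2] [h3 h4]; apply: hk.
- move: h1; rewrite mulmxDr hz.1 -{2}(addr0 r); exact: addrI.
- move=> i zi; have := h2 i; have := h4 i; rewrite !mxE zi; lra.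
Qed.

Lemma poly_conv m n (M : 'M[R]_(m, n)) r v w t :
  polyhedron M r v -> polyhedron M r w -> 0 <= t -> t <= 1 ->
  polyhedron M r (t *: v + (1 - t) *: w).
Proof.
move=> [hv1 hv2] [hw1 hw2] t0 t1; split.
  by rewrite mulmxDr -!scalemxAr hv1 hw1 -scalerDl addrC subrK scale1r.
move=> i; rewrite !mxE; have := hv2 i; have := hw2 i; nra.
Qed.

Lemma edge_supp m n (M : 'M[R]_(m, n)) r (v w : 'cV[R]_n) :
  is_vertex (polyhedron M r) v -> is_vertex (polyhedron M r) w -> v <> w ->
  (forall z, polyhedron M r z -> (forall i, v i 0 = 0 -> w i 0 = 0 -> z i 0 = 0) ->
     segment v w z) -> is_edge (polyhedron M r) v w.
Proof.
move=> hv hw hne hseg.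
pose c : 'rV[R]_n := \row_i (if (v i 0 == 0) && (w i 0 == 0) then -1 else 0).
have cE (z : 'cV[R]_n) : (c *m z) 0 0 = - \sum_(i | (v i 0 == 0) && (w i 0 == 0)) z i 0.
  rewrite mxE -sumrN [RHS]big_mkcond /=; apply: eq_bigr => i _; rewrite mxE.
  by case: ifP => _; rewrite ?mulN1r ?mul0r ?oppr0.
have cv : (c *m v) 0 0 = 0.
  by rewrite cE big1 ?oppr0 // => i /andP [/eqP -> _].
have cw : (c *m w) 0 0 = 0.
  by rewrite cE big1 ?oppr0 // => i /andP [_ /eqP ->].
split=> //; split=> //; split=> //; exists c; split.
  move=> z [_ hz]; rewrite cE cv oppr_le0; apply: sumr_ge0 => i _; exact: hz.
move=> z; split.
  move=> [hz]; rewrite cE cv => /eqP; rewrite oppr_eq0 => /eqP hs.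
  apply: hseg => // i vi wi.
  apply: (psumr_eq0P _ hs); first by move=> j _; exact: hz.2.
  by rewrite vi wi eqxx.
move=> [t [t0 [t1 ->]]]; split.
  exact: poly_conv hv.1 hw.1 t0 t1.
by rewrite scD !scZ cv cw !mulr0 addr0.
Qed.

Lemma supp_edge m n (M : 'M[R]_(m, n)) r (v w : 'cV[R]_n) :
  is_edge (polyhedron M r) v w -> forall z, polyhedron M r z ->
  (forall i, v i 0 = 0 -> w i 0 = 0 -> z i 0 = 0) -> segment v w z.
Proof.
move=> [hv [hw [hne [c [hmax hface]]]]] z hz hs.
apply/hface; split=> //.
pose mid := 2^-1 *: v + (1 - 2^-1) *: w.
have [hmid cmid] : polyhedron M r mid /\ (c *m mid) 0 0 = (c *m v) 0 0.
  apply/hface; exists 2^-1; split; first by rewrite invr_ge0; lra.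
  by split=> //; rewrite invf_le1; lra.
pose d := z - mid.
have hsd : forall i, mid i 0 = 0 -> d i 0 = 0.
  move=> i; rewrite /d !mxE => hm.
  have vi := hv.1.2 i; have wi := hw.1.2 i.
  have h2 : 0 < (2 : R)^-1 by rewrite invr_gt0; lra.
  have e1 : v i 0 = 0 by nra.
  have e2 : w i 0 = 0 by nra.
  by rewrite (hs i e1 e2) e1 e2 !mulr0 addr0 subrr.
have [eps ep H] := eps_ok hmid.2 hsd.
have Md : M *m d = 0 by rewrite mulmxBr hz.1 hmid.1 subrr.
have P2 : polyhedron M r (mid + eps *: d).
  split; first by rewrite mulmxDr -scalemxAr Md scaler0 addr0 hmid.1.
  by move=> i; have := (H i).1; rewrite !mxE.
have P3 : polyhedron M r (mid - eps *: d).
  split; first by rewrite mulmxBr -scalemxAr Md scaler0 subr0 hmid.1.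
  by move=> i; have := (H i).2; rewrite !mxE.
have c2 := hmax _ P2; have c3 := hmax _ P3.
rewrite scD scZ in c2.
rewrite scB scZ in c3.
have : eps * (c *m d) 0 0 = 0 by lra.
move/eqP; rewrite mulf_eq0 gt_eqF //= => /eqP cd.
move: cd; rewrite /d scB => cd.
lra.
Qed.

Lemma dist_mono n (P : 'cV[R]_n -> Prop) k v w :
  dist_le P k v w -> dist_le P k.+1 v w.
Proof.
elim: k v => [|k IH] v /=; first by move=> ->; left.
by case=> [->|[u [hu hd]]]; [left | right; exists u; split=> //; exact: IH].
Qed.

Lemma dist_monoN n (P : 'cV[R]_n -> Prop) k k' v w :
  (k <= k')%N -> dist_le P k v w -> dist_le P k' v w.
Proof.
move=> /subnKC <-; elim: (k' - k)%N => [|j IH]; first by rewrite addn0.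
by move=> h; rewrite addnS; apply: dist_mono; exact: IH.
Qed.

Lemma dist_refl n (P : 'cV[R]_n -> Prop) k v : dist_le P k v v.
Proof. by case: k => [|k] /=; [|left]. Qed.

Lemma dist_trans n (P : 'cV[R]_n -> Prop) k1 k2 v u w :
  dist_le P k1 v u -> dist_le P k2 u w -> dist_le P (k1 + k2) v w.
Proof.
elim: k1 v => [|k IH] v /=; first by move=> ->.
case=> [->|[u' [hu hd]]] h2.
  by move: (dist_monoN (leq_addl k.+1 k2) h2); rewrite addSn.
by right; exists u'; split=> //; exact: IH.
Qed.

Lemma dist_edge n (P : 'cV[R]_n -> Prop) v w : is_edge P v w -> dist_le P 1 v w.
Proof. by move=> h; right; exists w. Qed.

Lemma dist_lift n n' (P : 'cV[R]_n -> Prop) (Q : 'cV[R]_n' -> Prop) f k v w :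
  (forall v u, is_edge P v u -> is_edge Q (f v) (f u)) ->
  dist_le P k v w -> dist_le Q k (f v) (f w).
Proof.
move=> hf; elim: k v => [|k IH] v /=; first by move=> ->.
by case=> [->|[u [hu hd]]]; [left | right; exists (f u); split; [exact: hf|exact: IH]].
Qed.

Lemma seg_sym n (v w z : 'cV[R]_n) : segment v w z -> segment w v z.
Proof.
move=> [t [t0 [t1 ->]]]; exists (1 - t); split; first lra.
split; first lra.
have -> : 1 - (1 - t) = t by ring.
by rewrite addrC.
Qed.

Lemma edge_sym n (P : 'cV[R]_n -> Prop) v w : is_edge P v w -> is_edge P w v.
Proof.
move=> [hv [hw [hne [c [hmax hf]]]]].
have [_ cw] : P w /\ (c *m w) 0 0 = (c *m v) 0 0.
  apply/hf; exists 0; split=> //; split; first lra.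
  by rewrite scale0r add0r subr0 scale1r.
split=> //; split=> //; split; first by move=> e; apply: hne.
exists c; split; first by move=> z hz; rewrite cw; exact: hmax.
move=> z; rewrite cw; split; first by move/hf; exact: seg_sym.
by move/seg_sym/hf.
Qed.

Lemma dist1_sym n (P : 'cV[R]_n -> Prop) v w : dist_le P 1 v w -> dist_le P 1 w v.
Proof.
case=> [->|[u [hu hd]]]; first by left.
rewrite /= in hd; subst u.
by apply: dist_edge; exact: edge_sym.
Qed.

End Gen.

Section Main.
Variables (R : realFieldType) (m1 n1 m2 n2 : nat) (A : 'M[R]_(m1, n1)) (a : 'rV[R]_n1)
  (b : 'rV[R]_n2) (B : 'M[R]_(m2, n2)) (cA : 'cV[R]_m1) (cB : 'cV[R]_m2) (ca cb : R).

Local Notation PR := (polyhedron (RM A a b B) (Rr cA cB ca cb)).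
Local Notation PA := (polyhedron A cA).
Local Notation cc := (ca + cb).
Definition XP (s : R) := polyhedron (col_mx A a) (col_mx cA s%:M).
Definition YP (s : R) := polyhedron (col_mx b B) (col_mx (cc - s)%:M cB).

Lemma mx11 (X Y : 'M[R]_1) : X = Y <-> X 0 0 = Y 0 0.
Proof. by split=> [->//|h]; apply/matrixP => i j; rewrite !ord1. Qed.

Lemma mxDE p q (X Y : 'M[R]_(p, q)) i j : (X + Y) i j = X i j + Y i j.
Proof. by rewrite mxE. Qed.
Lemma mx0E p q i j : (0 : 'M[R]_(p, q)) i j = 0.
Proof. by rewrite mxE. Qed.

Lemma sM00 (s : R) : (s%:M : 'M[R]_1) 0 0 = s.
Proof. by rewrite mxE eqxx mulr1n. Qed.

Lemma col_all n n' (P : R -> R -> R -> Prop) (u1 u2 u : 'cV[R]_n) (v1 v2 v : 'cV[R]_n') :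
  (forall i, P (col_mx u1 v1 i 0) (col_mx u2 v2 i 0) (col_mx u v i 0)) <->
  (forall i, P (u1 i 0) (u2 i 0) (u i 0)) /\ (forall j, P (v1 j 0) (v2 j 0) (v j 0)).
Proof.
split=> [h|[hu hv] i].
  split=> i; [have := h (lshift n' i) | have := h (rshift n i)];
  by rewrite ?col_mxEu ?col_mxEd.
by rewrite -(splitK i); case: (split i) => j /=; rewrite ?col_mxEu ?col_mxEd.
Qed.

Lemma col_ge0 n n' (u : 'cV[R]_n) (v : 'cV[R]_n') :
  (forall i, 0 <= col_mx u v i 0) <-> (forall i, 0 <= u i 0) /\ (forall j, 0 <= v j 0).
Proof. exact: (col_all (fun _ _ x => 0 <= x) u u u v v v). Qed.

Lemma RM_mul (u : 'cV[R]_n1) (v : 'cV[R]_n2) : RM A a b B *m col_mx u v =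
  col_mx (A *m u) (col_mx (a *m u + b *m v) (B *m v)).
Proof. by rewrite /RM !mul_col_mx !mul_row_col !mul0mx addr0 add0r. Qed.

Lemma PR_col u v : PR (col_mx u v) <->
  [/\ A *m u = cA, (a *m u) 0 0 + (b *m v) 0 0 = cc, B *m v = cB,
      (forall i, 0 <= u i 0) & (forall j, 0 <= v j 0)].
Proof.
rewrite /polyhedron RM_mul /Rr col_ge0; split.
  move=> [/eq_col_mx [h1 /eq_col_mx [/mx11 h2 h3]] [h4 h5]]; split=> //.
  by move: h2; rewrite sM00 mxE.
move=> [h1 h2 h3 h4 h5]; split=> //.
by rewrite h1 h3; congr col_mx; congr col_mx; apply/mx11; rewrite sM00 mxE.
Qed.

Lemma RM_ker (e1 : 'cV[R]_n1) (e2 : 'cV[R]_n2) : RM A a b B *m col_mx e1 e2 = 0 <->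
  [/\ A *m e1 = 0, (a *m e1) 0 0 + (b *m e2) 0 0 = 0 & B *m e2 = 0].
Proof.
rewrite RM_mul; split.
  move/eqP; rewrite !col_mx_eq0 => /and3P [/eqP h1 /eqP /mx11 h2 /eqP h3]; split=> //.
  by move: h2; rewrite mxDE mx0E.
move=> [h1 h2 h3]; apply/eqP; rewrite !col_mx_eq0 h1 h3 !eqxx /= andbT.
by apply/eqP/mx11; rewrite mxDE mx0E.
Qed.

Lemma RK' u v : is_vertex PR (col_mx u v) ->
  forall (e1 : 'cV[R]_n1) (e2 : 'cV[R]_n2), A *m e1 = 0 ->
  (a *m e1) 0 0 + (b *m e2) 0 0 = 0 -> B *m e2 = 0 ->
  (forall i, u i 0 = 0 -> e1 i 0 = 0) -> (forall j, v j 0 = 0 -> e2 j 0 = 0) ->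
  e1 = 0 /\ e2 = 0.
Proof.
move=> hv e1 e2 h1 h2 h3 s1 s2.
have /eqP := vertex_kernel hv (e := col_mx e1 e2) (proj2 (RM_ker e1 e2) (And3 h1 h2 h3))
  (proj2 (col_all (fun _ z e => z = 0 -> e = 0) u u e1 v v e2) (conj s1 s2)).
by rewrite col_mx_eq0 => /andP [/eqP -> /eqP ->].
Qed.

Lemma RK u v : PR (col_mx u v) ->
  (forall (e1 : 'cV[R]_n1) (e2 : 'cV[R]_n2), A *m e1 = 0 ->
  (a *m e1) 0 0 + (b *m e2) 0 0 = 0 -> B *m e2 = 0 ->
  (forall i, u i 0 = 0 -> e1 i 0 = 0) -> (forall j, v j 0 = 0 -> e2 j 0 = 0) ->
  e1 = 0 /\ e2 = 0) -> is_vertex PR (col_mx u v).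
Proof.
move=> hp hk; apply: kernel_vertex => // e.
rewrite -(vsubmxK e) => /RM_ker [h1 h2 h3].
move/(col_all (fun _ z e => z = 0 -> e = 0) u u _ v v _) => [s1 s2].
by have [-> ->] := hk _ _ h1 h2 h3 s1 s2; rewrite col_mx0.
Qed.

Lemma RE u1 v1 u2 v2 : is_vertex PR (col_mx u1 v1) -> is_vertex PR (col_mx u2 v2) ->
  col_mx u1 v1 <> col_mx u2 v2 ->
  (forall u v, PR (col_mx u v) -> (forall i, u1 i 0 = 0 -> u2 i 0 = 0 -> u i 0 = 0) ->
     (forall j, v1 j 0 = 0 -> v2 j 0 = 0 -> v j 0 = 0) ->
     exists t, [/\ 0 <= t, t <= 1, u = t *: u1 + (1 - t) *: u2 & v = t *: v1 + (1 - t) *: v2]) ->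
  is_edge PR (col_mx u1 v1) (col_mx u2 v2).
Proof.
move=> h1 h2 hne H; apply: edge_supp => // z.
rewrite -(vsubmxK z) => hz.
move/(col_all (fun x y z => x = 0 -> y = 0 -> z = 0)) => [hsu hsv].
have [t [t0 t1 eu ev]] := H _ _ hz hsu hsv.
exists t; split=> //; split=> //.
by rewrite eu ev !scale_col_mx add_col_mx.
Qed.

Lemma XP_iff s u : XP s u <-> [/\ A *m u = cA, (a *m u) 0 0 = s & (forall i, 0 <= u i 0)].
Proof.
rewrite /XP /polyhedron mul_col_mx; split.
  by move=> [/eq_col_mx [h1 /mx11 h2] h3]; split=> //; move: h2; rewrite sM00.
by move=> [h1 h2 h3]; split=> //; rewrite h1; congr col_mx; apply/mx11; rewrite sM00.
Qed.

Lemma XP_ker (e : 'cV[R]_n1) : col_mx A a *m e = 0 <-> A *m e = 0 /\ (a *m e) 0 0 = 0.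
Proof.
rewrite mul_col_mx; split.
  by move/eqP; rewrite col_mx_eq0 => /andP [/eqP h1 /eqP /mx11 h2]; move: h2; rewrite mx0E.
move=> [h1 h2]; apply/eqP; rewrite col_mx_eq0 h1 eqxx /=; apply/eqP/mx11; by rewrite mx0E.
Qed.

Lemma YP_iff s v : YP s v <-> [/\ (b *m v) 0 0 = cc - s, B *m v = cB & (forall j, 0 <= v j 0)].
Proof.
rewrite /YP /polyhedron mul_col_mx; split.
  by move=> [/eq_col_mx [/mx11 h1 h2] h3]; split=> //; move: h1; rewrite sM00.
by move=> [h1 h2 h3]; split=> //; rewrite h2; congr col_mx; apply/mx11; rewrite sM00.
Qed.

Lemma YP_ker (e : 'cV[R]_n2) : col_mx b B *m e = 0 <-> (b *m e) 0 0 = 0 /\ B *m e = 0.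
Proof.
rewrite mul_col_mx; split.
  by move/eqP; rewrite col_mx_eq0 => /andP [/eqP /mx11 h1 /eqP h2]; move: h1; rewrite mx0E.
move=> [h1 h2]; apply/eqP; rewrite col_mx_eq0 h2 eqxx andbT; apply/eqP/mx11; by rewrite mx0E.
Qed.

Variables (x : 'cV[R]_n1) (y : 'cV[R]_n2).
Hypothesis Hxy : is_vertex PR (col_mx x y).
Hypothesis Hx : is_vertex PA x.

Definition inZ (v : 'cV[R]_n2) :=
  [/\ forall j, 0 <= v j 0, B *m v = cB & forall j, y j 0 = 0 -> v j 0 = 0].
Definition bandv (s : R) := exists v, inZ v /\ s + (b *m v) 0 0 = cc.
Definition pinned (w : 'cV[R]_n2) :=
  forall e : 'cV[R]_n2, B *m e = 0 -> (forall j, w j 0 = 0 -> e j 0 = 0) -> e = 0.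

Lemma mxBE p q (X Y : 'M[R]_(p, q)) i j : (X - Y) i j = X i j - Y i j.
Proof. by rewrite !mxE. Qed.
Lemma mxZE p q (X : 'M[R]_(p, q)) k i j : (k *: X) i j = k * X i j.
Proof. by rewrite !mxE. Qed.

Lemma Yind (e : 'cV[R]_n2) : B *m e = 0 -> (b *m e) 0 0 = 0 ->
  (forall j, y j 0 = 0 -> e j 0 = 0) -> e = 0.
Proof.
move=> h1 h2 h3.
have h0 : (a *m (0 : 'cV[R]_n1)) 0 0 + (b *m e) 0 0 = 0 by rewrite sc0 h2 addr0.
have hs : forall i, x i 0 = 0 -> (0 : 'cV[R]_n1) i 0 = 0 by move=> i _; rewrite mx0E.
by have [] := RK' Hxy (mulmx0 _ _) h0 h1 hs h3.
Qed.

Lemma inZy : inZ y.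
Proof. by have /PR_col [_ _ h3 _ h5] := Hxy.1; split. Qed.

Lemma band_t : bandv ((a *m x) 0 0).
Proof. by exists y; split; [exact: inZy | have /PR_col [] := Hxy.1]. Qed.

Lemma uniqZ (v1 v2 : 'cV[R]_n2) : B *m v1 = B *m v2 ->
  (forall j, y j 0 = 0 -> v1 j 0 = 0) -> (forall j, y j 0 = 0 -> v2 j 0 = 0) ->
  (b *m v1) 0 0 = (b *m v2) 0 0 -> v1 = v2.
Proof.
move=> h1 h2 h3 h4; apply/eqP; rewrite -subr_eq0; apply/eqP; apply: Yind.
- by rewrite mulmxBr h1 subrr.
- by rewrite scB h4 subrr.
- by move=> j yj; rewrite mxBE h2 // h3 // subrr.
Qed.

Lemma inZ_conv (v1 v2 : 'cV[R]_n2) mu : inZ v1 -> inZ v2 -> 0 <= mu -> mu <= 1 ->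
  inZ (mu *: v1 + (1 - mu) *: v2).
Proof.
move=> [h1 h2 h3] [k1 k2 k3] hm0 hm1; split.
- move=> j; rewrite mxDE !mxZE; have := h1 j; have := k1 j; nra.
- by rewrite mulmxDr -!scalemxAr h2 k2 -scalerDl addrC subrK scale1r.
- by move=> j yj; rewrite mxDE !mxZE h3 // k3 // !mulr0 addr0.
Qed.

Lemma band_conv s1 s2 s : bandv s1 -> bandv s2 -> s1 <= s -> s <= s2 -> bandv s.
Proof.
move=> [v1 [h1 e1]] [v2 [h2 e2]] l1 l2.
have [eq12|ne12] := eqVneq s1 s2.
  have -> : s = s1 by lra.
  by exists v1.
have d0 : s2 - s1 != 0 by rewrite subr_eq0 eq_sym.
pose mu := (s2 - s) / (s2 - s1).
have hmu : mu * (s2 - s1) = s2 - s by rewrite /mu mulfVK.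
have lt12 : s1 < s2 by rewrite lt_def eq_sym ne12 /=; lra.
have hm0 : 0 <= mu by rewrite /mu divr_ge0 //; lra.
have hm1 : mu <= 1 by rewrite /mu ler_pdivrMr; lra.
exists (mu *: v1 + (1 - mu) *: v2); split; first exact: inZ_conv.
rewrite scD !scZ.
have -> : (b *m v1) 0 0 = cc - s1 by lra.
have -> : (b *m v2) 0 0 = cc - s2 by lra.
nra.
Qed.

Lemma extremal_low beta s1 t : bandv beta -> bandv t -> ~ bandv s1 -> s1 < t ->
  (forall s, s1 <= s -> s < beta -> ~ bandv s) -> forall s, bandv s -> beta <= s.
Proof.
move=> hb ht hs1 lt1 H s hs.
have lt2 : s1 < beta.
  case: (ltP s1 beta) => // le1; exfalso; apply: hs1.
  by apply: (band_conv hb ht) => //; lra.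
case: (leP beta s) => // lt3; exfalso.
case: (leP s1 s) => le4; first exact: (H s le4 lt3).
by apply: hs1; apply: (band_conv hs hb) => //; lra.
Qed.

Lemma extremal_high beta s1 t : bandv beta -> bandv t -> ~ bandv s1 -> t < s1 ->
  (forall s, beta < s -> s <= s1 -> ~ bandv s) -> forall s, bandv s -> s <= beta.
Proof.
move=> hb ht hs1 lt1 H s hs.
have lt2 : beta < s1.
  case: (ltP beta s1) => // le1; exfalso; apply: hs1.
  by apply: (band_conv ht hb) => //; lra.
case: (leP s beta) => // lt3; exfalso.
case: (leP s s1) => le4; first exact: (H s lt3 le4).
by apply: hs1; apply: (band_conv hb hs) => //; lra.
Qed.

Lemma MAX (s0 dl l0 : R) (w0 : 'cV[R]_n2) : 0 <= l0 -> l0 <= 1 -> inZ w0 ->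
  s0 + l0 * dl + (b *m w0) 0 0 = cc ->
  exists l2, exists w2, [/\ l0 <= l2 /\ l2 <= 1, inZ w2, s0 + l2 * dl + (b *m w2) 0 0 = cc,
    (forall l, l2 < l -> l <= 1 -> ~ bandv (s0 + l * dl)) & (l2 < 1 -> pinned w2)].
Proof.
move=> l00 l01 hw0 e0.
have [dl0|dlne] := eqVneq dl 0.
  exists 1, w0; split; first (by split; lra); first exact: hw0.
  - by rewrite -e0 dl0 !mulr0.
  - by move=> l h1 h2; lra.
  - by rewrite ltxx.
have [w0p w0B w0y] := hw0.
case: (classic (exists d : 'cV[R]_n2, [/\ B *m d = 0,
   (forall j, y j 0 = 0 -> d j 0 = 0) & (b *m d) 0 0 != 0])) => [[d [dB dy db]]|nod].
  pose d' := (- dl / (b *m d) 0 0) *: d.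
  have d'b : (b *m d') 0 0 = - dl by rewrite /d' scZ mulfVK.
  have d'B : B *m d' = 0 by rewrite /d' -scalemxAr dB scaler0.
  have d'y j : y j 0 = 0 -> d' j 0 = 0 by move=> yj; rewrite /d' mxZE dy // mulr0.
  pose wl l := w0 + (l - l0) *: d'.
  have wlE l j : wl l j 0 = w0 j 0 + (l - l0) * d' j 0 by rewrite /wl mxDE mxZE.
  have wlB l : B *m wl l = cB by rewrite /wl mulmxDr -scalemxAr d'B scaler0 addr0.
  have wly l j : y j 0 = 0 -> wl l j 0 = 0 by move=> yj; rewrite wlE w0y // d'y // mulr0 addr0.
  have wlb l : s0 + l * dl + (b *m wl l) 0 0 = cc.
    by rewrite /wl scD scZ d'b; lra.
  have wlu l v : inZ v -> s0 + l * dl + (b *m v) 0 0 = cc -> v = wl l.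
    move=> [_ vB vy] ev; apply: uniqZ; [by rewrite wlB vB | exact: vy | exact: wly |].
    by have h := wlb l; lra.
  case: (pickP (fun j => w0 j 0 + (1 - l0) * d' j 0 < 0)) => [j0 hj0|hnone]; last first.
    exists 1, (wl 1); split; first (by split; lra).
    - split; [move=> j; rewrite wlE; have := hnone j; rewrite /= ltNge => /negbFE // | exact: wlB | exact: wly].
    - exact: wlb.
    - by move=> l h1 h2; lra.
    - by rewrite ltxx.
  pose J := (fun j => w0 j 0 + (1 - l0) * d' j 0 < 0).
  pose rho := (fun j => w0 j 0 / (- d' j 0)).
  have Jneg j : J j -> d' j 0 < 0.
    rewrite /J => hj; have := w0p j; nra.
  have Jrho j : J j -> rho j * (- d' j 0) = w0 j 0.
    move=> hj; rewrite /rho mulfVK //; have := Jneg j hj; rewrite oppr_eq0; lra.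
  have Jrho0 j : J j -> 0 <= rho j.
    move=> hj; rewrite /rho divr_ge0 //; have := Jneg j hj; lra.
  case: (@arg_minP _ _ _ j0 J rho hj0) => j hj hmin.
  have rj1 : rho j < 1 - l0.
    rewrite /rho ltr_pdivrMr; last by have := Jneg j hj; lra.
    by have := hj; rewrite /J; lra.
  have rj0 := Jrho0 j hj.
  have rjE := Jrho j hj.
  have dj := Jneg j hj.
  exists (l0 + rho j), (wl (l0 + rho j)); split.
  - split; lra.
  - split; [move=> i | exact: wlB | exact: wly]; rewrite wlE.
    have -> : l0 + rho j - l0 = rho j by ring.
    have w0i := w0p i.
    case: (leP 0 (d' i 0)) => di; first nra.
    case Ji : (J i).
      have := hmin i Ji; have := Jrho i Ji; nra.
    move: Ji; rewrite /J => /negbT; rewrite -leNgt => Ji.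
    nra.
  - exact: wlb.
  - move=> l h1 h2 [v [hv ev]].
    have vE := wlu _ _ hv ev.
    have [vp _ _] := hv.
    have := vp j; rewrite vE wlE; nra.
  - move=> _ e eB ew.
    have wy : forall i, y i 0 = 0 -> e i 0 = 0 by move=> i yi; apply: ew; exact: wly.
    have d'b0 : (b *m d') 0 0 != 0 by rewrite d'b oppr_eq0.
    pose mu := (b *m e) 0 0 / (b *m d') 0 0.
    have eE : e = mu *: d'.
      apply/eqP; rewrite -subr_eq0; apply/eqP; apply: Yind.
      + by rewrite mulmxBr -scalemxAr eB d'B scaler0 subrr.
      + by rewrite scB scZ /mu mulfVK // subrr.
      + by move=> i yi; rewrite mxBE mxZE wy // d'y // mulr0 subrr.
    have wj : wl (l0 + rho j) j 0 = 0.
      rewrite wlE; have -> : l0 + rho j - l0 = rho j by ring.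
      lra.
    have := ew j wj; rewrite eE mxZE => /eqP; rewrite mulf_eq0 => /orP [/eqP mu0|/eqP dj0]; last by exfalso; lra.
    by rewrite mu0 scale0r.
exists l0, w0; split=> //.
- move=> l h1 h2 [v [[vp vB vy] ev]].
  have hb : (b *m (v - w0)) 0 0 = 0.
    apply/eqP; apply: contraT => hne; exfalso; apply: nod; exists (v - w0); split=> //.
    + by rewrite mulmxBr vB w0B subrr.
    + by move=> j yj; rewrite mxBE vy // w0y // subrr.
  move: hb; rewrite scB => hb.
  have : (l - l0) * dl = 0 by lra.
  by move/eqP; rewrite mulf_eq0 (negbTE dlne) orbF subr_eq0 => /eqP; lra.
- move=> _ e eB ew; apply: Yind => //; last first.
    by move=> j yj; apply: ew; exact: w0y.
  apply/eqP; apply: contraT => hne; exfalso; apply: nod; exists e; split=> //.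
  by move=> j yj; apply: ew; exact: w0y.
Qed.

Definition pt n (p p' : 'cV[R]_n) (l : R) := p + l *: (p' - p).

Lemma ptE n (p p' : 'cV[R]_n) l i j : pt p p' l i j = p i j + l * (p' i j - p i j).
Proof. by rewrite /pt mxDE mxZE mxBE. Qed.

Lemma sc_pt n (c : 'rV[R]_n) (p p' : 'cV[R]_n) l :
  (c *m pt p p' l) 0 0 = (c *m p) 0 0 + l * ((c *m p') 0 0 - (c *m p) 0 0).
Proof. by rewrite /pt scD scZ scB. Qed.

Lemma pt0 n (p p' : 'cV[R]_n) : pt p p' 0 = p.
Proof. by rewrite /pt scale0r addr0. Qed.

Lemma pt1 n (p p' : 'cV[R]_n) : pt p p' 1 = p'.
Proof. by rewrite /pt scale1r addrC subrK. Qed.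

Lemma pt_rev n (p p' : 'cV[R]_n) l : pt p' p (1 - l) = pt p p' l.
Proof. by apply/matrixP => i j; rewrite !ptE; ring. Qed.

Lemma pt_aff n (p p' : 'cV[R]_n) l1 l2 tau :
  tau *: pt p p' l1 + (1 - tau) *: pt p p' l2 = pt p p' (tau * l1 + (1 - tau) * l2).
Proof. by apply/matrixP => i j; rewrite mxDE !mxZE !ptE; ring. Qed.

Lemma pt_poly m n (M : 'M[R]_(m, n)) r p p' l : polyhedron M r p -> polyhedron M r p' ->
  0 <= l -> l <= 1 -> polyhedron M r (pt p p' l).
Proof.
move=> hp hp' l0 l1.
have -> : pt p p' l = (1 - l) *: p + (1 - (1 - l)) *: p'.
  by apply/matrixP => i j; rewrite ptE mxDE !mxZE; ring.
apply: poly_conv => //; lra.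
Qed.

Lemma seg_pt n (p p' z : 'cV[R]_n) : segment p p' z ->
  exists l, [/\ 0 <= l, l <= 1 & z = pt p p' l].
Proof.
move=> [t [t0 [t1 ->]]]; exists (1 - t); split; [lra | lra |].
by apply/matrixP => i j; rewrite mxDE !mxZE ptE; ring.
Qed.

Lemma Lvert p wp : is_vertex PA p -> inZ wp -> (a *m p) 0 0 + (b *m wp) 0 0 = cc ->
  is_vertex PR (col_mx p wp).
Proof.
move=> hp [w1 w2 w3] he; apply: RK; first by apply/PR_col; split=> //; case: hp => [[]].
move=> e1 e2 h1 h2 h3 s1 s2.
have e10 : e1 = 0 := vertex_kernel hp h1 s1.
split=> //; apply: Yind => //.
  by move: h2; rewrite e10 sc0 add0r.
by move=> j yj; apply: s2; exact: w3.
Qed.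

Lemma PinVert r w : inZ w -> pinned w -> is_vertex (XP (cc - (b *m w) 0 0)) r ->
  is_vertex PR (col_mx r w).
Proof.
move=> [w1 w2 w3] hpin hr.
have /XP_iff [r1 r2 r3] := hr.1.
apply: RK; first by apply/PR_col; split=> //; rewrite r2; ring.
move=> e1 e2 h1 h2 h3 s1 s2.
have e20 : e2 = 0 := hpin _ h3 s2.
split=> //; apply: (vertex_kernel hr) => //; apply/XP_ker; split=> //.
by move: h2; rewrite e20 sc0 addr0.
Qed.

Lemma YVert x2 v : is_vertex PA x2 -> is_vertex (YP ((a *m x2) 0 0)) v ->
  is_vertex PR (col_mx x2 v).
Proof.
move=> hx2 hv.
have /YP_iff [v1 v2 v3] := hv.1.
apply: RK; first by apply/PR_col; split=> //; [case: hx2 => [[]] | rewrite v1; ring | case: hx2 => [[]]].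
move=> e1 e2 h1 h2 h3 s1 s2.
have e10 : e1 = 0 := vertex_kernel hx2 h1 s1.
split=> //; apply: (vertex_kernel hv) => //; apply/YP_ker; split=> //.
by move: h2; rewrite e10 sc0 add0r.
Qed.

Lemma XEdge w r r' : inZ w -> pinned w -> is_edge (XP (cc - (b *m w) 0 0)) r r' ->
  is_edge PR (col_mx r w) (col_mx r' w).
Proof.
move=> hw hpin he.
have [hr [hr' [hne _]]] := he.
apply: RE; [exact: PinVert | exact: PinVert | |].
  by move/eq_col_mx => [].
move=> u v /PR_col [u1 u2 u3 u4 u5] su sv.
have vw : v = w.
  apply/eqP; rewrite -subr_eq0; apply/eqP; apply: hpin.
  - by case: hw => _ hw2 _; rewrite mulmxBr u3 hw2 subrr.
  - by move=> j wj; rewrite mxBE sv // wj subrr.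
subst v.
have hu : XP (cc - (b *m w) 0 0) u by apply/XP_iff; split=> //; lra.
have [t [t0 [t1 ->]]] := supp_edge he hu su.
exists t; split=> //.
by rewrite -scalerDl addrC subrK scale1r.
Qed.

Lemma YEdge x2 v v' : is_vertex PA x2 -> is_edge (YP ((a *m x2) 0 0)) v v' ->
  is_edge PR (col_mx x2 v) (col_mx x2 v').
Proof.
move=> hx2 he.
have [hv [hv' [hne _]]] := he.
apply: RE; [exact: YVert | exact: YVert | |].
  by move/eq_col_mx => [].
move=> u w /PR_col [u1 u2 u3 u4 u5] su sw.
have ux : u = x2.
  apply/eqP; rewrite -subr_eq0; apply/eqP; apply: (vertex_kernel hx2).
  - by rewrite mulmxBr u1 hx2.1.1 subrr.
  - by move=> j xj; rewrite mxBE su // xj subrr.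
subst u.
have hw : YP ((a *m x2) 0 0) w by apply/YP_iff; split=> //; lra.
have [t [t0 [t1 ->]]] := supp_edge he hw sw.
exists t; split=> //.
by rewrite -scalerDl addrC subrK scale1r.
Qed.

Definition Bnd (sg : bool) r w := [/\ inZ w, pinned w, (a *m r) 0 0 + (b *m w) 0 0 = cc,
  is_vertex (XP ((a *m r) 0 0)) r &
  forall v, inZ v -> if sg then (b *m w) 0 0 <= (b *m v) 0 0 else (b *m v) 0 0 <= (b *m w) 0 0].

Lemma Bnd_vertex sg r w : Bnd sg r w -> is_vertex PR (col_mx r w).
Proof.
move=> [h1 h2 h3 h4 _]; apply: PinVert => //.
by have -> : cc - (b *m w) 0 0 = (a *m r) 0 0 by lra.
Qed.

Variable D : nat.
Hypothesis HD : mat_diam_le (col_mx A a) D.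

Lemma X5 sg r w r' w' : Bnd sg r w -> Bnd sg r' w' ->
  dist_le PR D (col_mx r w) (col_mx r' w').
Proof.
move=> [h1 h2 h3 h4 h5] [k1 k2 k3 k4 k5].
have ww : w' = w.
  have [h11 h12 h13] := h1; have [k11 k12 k13] := k1.
  apply: uniqZ => //; first by rewrite h12 k12.
  have := h5 _ k1; have := k5 _ h1; case: sg {h5 k5 h4 k4} => ? ?; lra.
subst w'.
have er : (a *m r') 0 0 = (a *m r) 0 0 by lra.
rewrite er in k4.
have er2 : (a *m r) 0 0 = cc - (b *m w) 0 0 by lra.
have hd := HD h4 k4.
apply: (dist_lift (f := fun u => col_mx u w)) hd => v u.
rewrite -/(XP ((a *m r) 0 0)) er2; exact: XEdge.
Qed.

Definition out (sg : bool) (u : 'cV[R]_n1) := ~ bandv ((a *m u) 0 0) /\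
  (if sg then (a *m x) 0 0 < (a *m u) 0 0 else (a *m u) 0 0 < (a *m x) 0 0).

Lemma lam_s s0 dl l2 : l2 < 1 -> (forall l, l2 < l -> l <= 1 -> ~ bandv (s0 + l * dl)) ->
  forall s, (s0 + dl <= s /\ s < s0 + l2 * dl) \/ (s0 + l2 * dl < s /\ s <= s0 + dl) ->
  ~ bandv s.
Proof.
move=> hl H s hs.
have [dl0|dlne] := eqVneq dl 0.
  by exfalso; rewrite dl0 mulr0 addr0 in hs; lra.
pose l := (s - s0) / dl.
have sE : s = s0 + l * dl by rewrite /l mulfVK //; ring.
rewrite sE; apply: H; rewrite sE in hs.
- case: hs => [[h1 h2]|[h1 h2]].
  + case: (ltP dl 0) => hd; nra.
  + case: (ltP dl 0) => hd; nra.
- case: hs => [[h1 h2]|[h1 h2]].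
  + case: (ltP dl 0) => hd; nra.
  + case: (ltP dl 0) => hd; nra.
Qed.

Lemma BC sg p p' l2 w2 : is_edge PA p p' -> 0 <= l2 -> l2 < 1 -> inZ w2 ->
  (a *m pt p p' l2) 0 0 + (b *m w2) 0 0 = cc -> pinned w2 ->
  (forall l, l2 < l -> l <= 1 -> ~ bandv ((a *m pt p p' l) 0 0)) -> out sg p' ->
  Bnd sg (pt p p' l2) w2.
Proof.
move=> he l20 l21 hw2 e2 hpin Hb [hout hside].
have hp := he.1; have hp' := he.2.1.
have hq : PA (pt p p' l2) by apply: pt_poly => //; [exact: hp.1 | exact: hp'.1 | lra].
have bq : bandv ((a *m pt p p' l2) 0 0) by exists w2.
have dne : (a *m p') 0 0 - (a *m p) 0 0 != 0.
  apply/eqP => d0; apply: hout.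
  by move: bq; rewrite sc_pt d0 mulr0 addr0 -(subr0 ((a *m p') 0 0)) -d0 opprB addrC subrK.
split=> //.
  apply: kernel_vertex; first by apply/XP_iff; split=> //; [exact: hq.1 | exact: hq.2].
  move=> e /XP_ker [eA ea] se.
  have [eps ep H] := eps_ok hq.2 se.
  have hz : PA (pt p p' l2 + eps *: e).
    split; first by rewrite mulmxDr -scalemxAr eA scaler0 addr0 hq.1.
    by move=> i; rewrite mxDE mxZE; exact: (H i).1.
  have sz : forall i, p i 0 = 0 -> p' i 0 = 0 -> (pt p p' l2 + eps *: e) i 0 = 0.
    move=> i pi p'i; have qi : pt p p' l2 i 0 = 0 by rewrite ptE pi p'i; ring.
    by rewrite mxDE mxZE se // qi mulr0 addr0.
  have [mu [mu0 mu1 hmu]] := seg_pt (supp_edge he hz sz).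
  have : (a *m (pt p p' l2 + eps *: e)) 0 0 = (a *m pt p p' mu) 0 0 by rewrite hmu.
  rewrite scD scZ ea mulr0 addr0 !sc_pt => hm.
  have : (mu - l2) * ((a *m p') 0 0 - (a *m p) 0 0) = 0 by lra.
  move/eqP; rewrite mulf_eq0 (negbTE dne) orbF subr_eq0 => /eqP ml.
  move: hmu; rewrite ml -{2}(addr0 (pt p p' l2)) => /addrI /eqP.
  by rewrite scaler_eq0 gt_eqF //= => /eqP.
move=> v hv.
have bv : bandv (cc - (b *m v) 0 0) by exists v; split=> //; ring.
have Hb' : forall l, l2 < l -> l <= 1 ->
    ~ bandv ((a *m p) 0 0 + l * ((a *m p') 0 0 - (a *m p) 0 0)).
  by move=> l h1 h2; rewrite -sc_pt; exact: Hb.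
have hls := lam_s l21 Hb'.
have eq1 : (a *m p) 0 0 + ((a *m p') 0 0 - (a *m p) 0 0) = (a *m p') 0 0 by ring.
rewrite eq1 -sc_pt in hls.
case: sg hside => hside.
  have := extremal_high bq band_t hout hside (fun s h1 h2 => hls s (or_intror (conj h1 h2))) bv.
  lra.
have := extremal_low bq band_t hout hside (fun s h1 h2 => hls s (or_introl (conj h1 h2))) bv.
lra.
Qed.

Lemma Seg p p' l1 l2 w1 w2 : is_edge PA p p' -> 0 <= l1 -> l1 <= l2 -> l2 <= 1 ->
  inZ w1 -> inZ w2 ->
  (a *m pt p p' l1) 0 0 + (b *m w1) 0 0 = cc -> (a *m pt p p' l2) 0 0 + (b *m w2) 0 0 = cc ->
  is_vertex PR (col_mx (pt p p' l1) w1) -> is_vertex PR (col_mx (pt p p' l2) w2) ->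
  (forall l v, 0 <= l -> l <= 1 -> inZ v -> (a *m pt p p' l) 0 0 + (b *m v) 0 0 = cc ->
     l1 <= l /\ l <= l2) ->
  dist_le PR 1 (col_mx (pt p p' l1) w1) (col_mx (pt p p' l2) w2).
Proof.
move=> he l10 l12 l21 hw1 hw2 e1 e2 hv1 hv2 H.
have [[w1p w1B w1y] [w2p w2B w2y]] := (hw1, hw2).
have [l12e|l12n] := eqVneq l1 l2.
  subst l2; left; congr col_mx; apply: uniqZ => //; first by rewrite w1B w2B.
  lra.
have lt12 : l1 < l2 by rewrite lt_def eq_sym l12n.
apply: dist_edge; apply: RE => //.
  move/eq_col_mx => [hpt _]; apply: he.2.2.1; apply/matrixP => i j.
  have := congr1 (fun M : 'cV[R]_n1 => M i j) hpt; rewrite /= !ptE => h.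
  have : (l2 - l1) * (p' i j - p i j) = 0 by lra.
  move/eqP; rewrite mulf_eq0 subr_eq0 eq_sym (negbTE l12n) /= subr_eq0 => /eqP ->.
  by [].
move=> u v /PR_col [u1 u2 u3 u4 u5] su sv.
have hu : PA u by split.
have su' : forall i, p i 0 = 0 -> p' i 0 = 0 -> u i 0 = 0.
  by move=> i pi p'i; apply: su; rewrite ptE pi p'i; ring.
have [l [l0 l1' ul]] := seg_pt (supp_edge he hu su').
have hv : inZ v.
  split=> // j yj; apply: sv; [exact: w1y | exact: w2y].
have [hl1 hl2] : l1 <= l /\ l <= l2 by apply: (H l v) => //; rewrite -ul.
have d0 : l2 - l1 != 0 by rewrite subr_eq0 eq_sym.
pose tau := (l2 - l) / (l2 - l1).
have htau : tau * (l2 - l1) = l2 - l by rewrite /tau mulfVK.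
have t0 : 0 <= tau by rewrite /tau divr_ge0 //; lra.
have t1 : tau <= 1 by rewrite /tau ler_pdivrMr; lra.
have hl : l = tau * l1 + (1 - tau) * l2 by lra.
exists tau; split=> //.
  by rewrite pt_aff -hl.
apply: uniqZ => //.
- by rewrite mulmxDr -!scalemxAr w1B w2B -scalerDl addrC subrK scale1r.
- by case: hv.
- by move=> j yj; rewrite mxDE !mxZE w1y // w2y // !mulr0 addr0.
rewrite scD !scZ.
have -> : (b *m v) 0 0 = cc - (a *m u) 0 0 by lra.
have -> : (b *m w1) 0 0 = cc - (a *m pt p p' l1) 0 0 by lra.
have -> : (b *m w2) 0 0 = cc - (a *m pt p p' l2) 0 0 by lra.
rewrite ul !sc_pt hl; ring.
Qed.

Lemma X1 p p' wp wp' : is_edge PA p p' -> inZ wp -> (a *m p) 0 0 + (b *m wp) 0 0 = cc ->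
  inZ wp' -> (a *m p') 0 0 + (b *m wp') 0 0 = cc ->
  dist_le PR 1 (col_mx p wp) (col_mx p' wp').
Proof.
move=> he hw e hw' e'.
have H := Seg (l1 := 0) (l2 := 1) (w1 := wp) (w2 := wp') he.
rewrite !pt0 !pt1 in H.
apply: H => //; try lra.
- by apply: Lvert => //; exact: he.1.
- by apply: Lvert => //; exact: he.2.1.
Qed.

Lemma X2 sg p p' wp : is_edge PA p p' -> inZ wp -> (a *m p) 0 0 + (b *m wp) 0 0 = cc ->
  out sg p' -> exists q w, Bnd sg q w /\ dist_le PR 1 (col_mx p wp) (col_mx q w).
Proof.
move=> he hw e hout.
have e0 : (a *m p) 0 0 + 0 * ((a *m p') 0 0 - (a *m p) 0 0) + (b *m wp) 0 0 = cc.
  by rewrite mul0r addr0.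
have [l2 [w2 [[l0 l1] hw2 e2 Hb hpin]]] := MAX (lexx 0) ler01 hw e0.
have Hb' : forall l, l2 < l -> l <= 1 -> ~ bandv ((a *m pt p p' l) 0 0).
  by move=> l h1 h2; rewrite sc_pt; exact: Hb.
rewrite -sc_pt in e2.
have lt1 : l2 < 1.
  rewrite lt_def l1 andbT; apply/eqP => l21; apply: hout.1.
  exists w2; split=> //; rewrite -l21 in e2; by rewrite pt1 in e2.
exists (pt p p' l2), w2; split; first exact: (BC he l0 lt1 hw2 e2 (hpin lt1) Hb' hout).
have H := Seg (l1 := 0) (l2 := l2) (w1 := wp) (w2 := w2) he.
rewrite !pt0 in H.
apply: H => //; try lra.
- by apply: Lvert => //; exact: he.1.
- exact: (Bnd_vertex (BC he l0 lt1 hw2 e2 (hpin lt1) Hb' hout)).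
- move=> l v h0 h1 hv ev; split=> //.
  case: (leP l l2) => // hl; exfalso; apply: (Hb' l hl h1); by exists v.
Qed.

Lemma X3 sg p p' wp' : is_edge PA p p' -> out sg p -> inZ wp' ->
  (a *m p') 0 0 + (b *m wp') 0 0 = cc ->
  exists q w, Bnd sg q w /\ dist_le PR 1 (col_mx q w) (col_mx p' wp').
Proof.
move=> he hout hw e.
have [q [w [hb hd]]] := X2 (edge_sym he) hw e hout.
by exists q, w; split=> //; exact: dist1_sym.
Qed.

Lemma X4 sg p p' : is_edge PA p p' -> out sg p -> out (~~ sg) p' ->
  exists q1 w1 q2 w2, [/\ Bnd sg q1 w1, Bnd (~~ sg) q2 w2 &
    dist_le PR 1 (col_mx q1 w1) (col_mx q2 w2)].
Proof.
move=> he [ho1 hs1] [ho2 hs2].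
set t := (a *m x) 0 0 in hs1 hs2.
set s0 := (a *m p) 0 0 in ho1 hs1 *.
set s1 := (a *m p') 0 0 in ho2 hs2 *.
have hy : t + (b *m y) 0 0 = cc by have /PR_col [] := Hxy.1.
have dne : s1 - s0 != 0.
  by apply/eqP => h; case: sg hs1 hs2 => /= ? ?; lra.
pose l0 := (t - s0) / (s1 - s0).
have hl0 : l0 * (s1 - s0) = t - s0 by rewrite /l0 mulfVK.
have [l00 l01] : 0 <= l0 /\ l0 <= 1.
  by case: sg hs1 hs2 => /= ? ?; case: (ltP (s1 - s0) 0) => ?; split; nra.
have e0 : s0 + l0 * (s1 - s0) + (b *m y) 0 0 = cc by lra.
have [l2 [w2 [[l2a l2b] hw2 e2 Hb hpin]]] := MAX l00 l01 inZy e0.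
have e0' : s1 + (1 - l0) * (s0 - s1) + (b *m y) 0 0 = cc by lra.
have l0a : 0 <= 1 - l0 by lra.
have l0b : 1 - l0 <= 1 by lra.
have [l3 [w1 [[l3a l3b] hw1 e3 Hb3 hpin3]]] := MAX l0a l0b inZy e0'.
have Hb' : forall l, l2 < l -> l <= 1 -> ~ bandv ((a *m pt p p' l) 0 0).
  by move=> l h1 h2; rewrite sc_pt; exact: Hb.
have Hb3' : forall l, l3 < l -> l <= 1 -> ~ bandv ((a *m pt p' p l) 0 0).
  by move=> l h1 h2; rewrite sc_pt; exact: Hb3.
rewrite -sc_pt in e2; rewrite -sc_pt in e3.
have lt2 : l2 < 1.
  rewrite lt_def l2b andbT; apply/eqP => l21; apply: ho2.
  exists w2; split=> //; rewrite -l21 in e2; by rewrite pt1 in e2.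
have lt3 : l3 < 1.
  rewrite lt_def l3b andbT; apply/eqP => l31; apply: ho1.
  exists w1; split=> //; rewrite -l31 in e3; by rewrite pt1 in e3.
have B2 := BC he (le_trans l00 l2a) lt2 hw2 e2 (hpin lt2) Hb' (conj ho2 hs2).
have B1 : Bnd sg (pt p' p l3) w1.
  apply: BC (edge_sym he) _ lt3 hw1 e3 (hpin3 lt3) Hb3' _; first lra.
  by split.
have ept : pt p' p l3 = pt p p' (1 - l3).
  by rewrite -pt_rev; congr pt; ring.
exists (pt p' p l3), w1, (pt p p' l2), w2; split=> //.
rewrite ept; rewrite ept in e3 B1.
apply: Seg => //; try lra.
- exact: Bnd_vertex B1.
- exact: Bnd_vertex B2.
- move=> l v h0 h1 hv ev; split.
    case: (leP (1 - l3) l) => // hl; exfalso.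
    apply: (Hb3' (1 - l)); [lra | lra |].
    by exists v; rewrite pt_rev.
  case: (leP l l2) => // hl; exfalso; apply: (Hb' l hl h1); by exists v.
Qed.

Definition region (bl bh : bool) (u : 'cV[R]_n1) :=
  bandv ((a *m u) 0 0) \/ (bl /\ out false u) \/ (bh /\ out true u).

Lemma region_out (bl bh sg : bool) u : region bl bh u ->
  ~ region (bl && sg) (bh && ~~ sg) u -> out sg u.
Proof.
move=> [h|[[h1 h2]|[h1 h2]]] hn.
- by exfalso; apply: hn; left.
- case: sg hn => //= hn; exfalso; apply: hn; right; left; by rewrite andbT.
- case: sg hn => //= hn; exfalso; apply: hn; right; right; by rewrite andbT.
Qed.

Lemma out_excl u : out false u -> out true u -> False.
Proof. by move=> [_ h1] [_ h2] /=; lra. Qed.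

Lemma bound_helper (D0 k : nat) (bl bh sg : bool) : (if sg then bh else bl) ->
  (D0 + (1 + (k + D0 * ((bl && sg) + (bh && ~~ sg)))) <= k.+1 + D0 * (bl + bh))%N.
Proof. by case: sg; case: bl; case: bh => //= _; lia. Qed.

Section Claim.
Variables (x2 : 'cV[R]_n1) (z2 : 'cV[R]_n2).
Hypothesis Hz2 : inZ z2.
Hypothesis He2 : (a *m x2) 0 0 + (b *m z2) 0 0 = cc.

Fixpoint wk (Q : 'cV[R]_n1 -> Prop) (k : nat) (p : 'cV[R]_n1) : Prop :=
  Q p /\ match k with
         | O => p = x2
         | S k' => p = x2 \/ exists u, is_edge PA p u /\ wk Q k' u
         end.

Lemma wk_head Q k p : wk Q k p -> Q p.
Proof. by case: k => [|k] []. Qed.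

Lemma wk_of_dist k p : dist_le PA k p x2 -> (forall u, region true true u) ->
  wk (region true true) k p.
Proof.
move=> hd hQ; elim: k p hd => [|k IH] p /=.
  by move=> ->; split.
by case=> [->|[u [hu hd]]]; split=> //; [left | right; exists u; split=> //; exact: IH].
Qed.

Lemma base_eq wp : inZ wp -> (a *m x2) 0 0 + (b *m wp) 0 0 = cc -> wp = z2.
Proof.
move=> [w1 w2 w3] e; have [z1 z2' z3] := Hz2.
apply: uniqZ => //; first by rewrite w2 z2'.
have h := He2; lra.
Qed.

Lemma reg_x2 bl bh : region bl bh x2.
Proof. by left; exists z2. Qed.

Lemma claim k : forall (bl bh : bool) p, wk (region bl bh) k p ->
  (forall wp, inZ wp -> (a *m p) 0 0 + (b *m wp) 0 0 = cc ->
     dist_le PR (k + D * (bl + bh)) (col_mx p wp) (col_mx x2 z2)) /\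
  (forall sg : bool, (if sg then bh else bl) ->
     ~ wk (region (bl && sg) (bh && ~~ sg)) k p ->
     forall r w, Bnd sg r w -> dist_le PR (k + D * (bl + bh)) (col_mx r w) (col_mx x2 z2)).
Proof.
elim: k => [|k IH] bl bh p /= [hreg hrest].
  subst p; split.
    by move=> wp hwp e; rewrite (base_eq hwp e); exact: dist_refl.
  by move=> sg _ hn; exfalso; apply: hn; split=> //; exact: reg_x2.
case: hrest => [hpx|[u [he hwk]]].
  subst p; split.
    by move=> wp hwp e; rewrite (base_eq hwp e); left.
  by move=> sg _ hn; exfalso; apply: hn; split; [exact: reg_x2 | left].
have [IHin IHout] := IH bl bh u hwk.
have hregu := wk_head hwk.
split.
  move=> wp hwp ep.
  have fin : forall n, dist_le PR 1 (col_mx p wp) n ->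
      dist_le PR (k + D * (bl + bh)) n (col_mx x2 z2) ->
      dist_le PR (k.+1 + D * (bl + bh)) (col_mx p wp) (col_mx x2 z2).
    by move=> n h1 h2; apply: dist_monoN (dist_trans h1 h2); lia.
  case: hregu => [[wu [hwu eu]]|[[hbl ho]|[hbh ho]]].
  - exact: fin (X1 he hwp ep hwu eu) (IHin wu hwu eu).
  - have [q [w [hb hd]]] := X2 he hwp ep ho.
    apply: fin hd (IHout false hbl _ q w hb).
    move=> /wk_head [h|[[h1 _]|[_ h2]]]; [exact: ho.1 h | by rewrite andbF in h1 | exact: out_excl ho h2].
  - have [q [w [hb hd]]] := X2 he hwp ep ho.
    apply: fin hd (IHout true hbh _ q w hb).
    move=> /wk_head [h|[[_ h2]|[h1 _]]]; [exact: ho.1 h | exact: out_excl h2 ho | by rewrite andbF in h1].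
move=> sg hallow hn r w hb.
case: (classic (region (bl && sg) (bh && ~~ sg) p)) => hp.
  have hk : ~ wk (region (bl && sg) (bh && ~~ sg)) k u.
    by move=> hk; apply: hn; split=> //; right; exists u.
  exact: dist_mono (IHout sg hallow hk r w hb).
have hop := region_out hreg hp.
case: (classic (wk (region (bl && sg) (bh && ~~ sg)) k u)) => hk; last first.
  exact: dist_mono (IHout sg hallow hk r w hb).
have [IHin' IHout'] := IH _ _ u hk.
have fin : forall q wq n, Bnd sg q wq -> dist_le PR 1 (col_mx q wq) n ->
    dist_le PR (k + D * ((bl && sg) + (bh && ~~ sg))) n (col_mx x2 z2) ->
    dist_le PR (k.+1 + D * (bl + bh)) (col_mx r w) (col_mx x2 z2).
  move=> q wq n hq h1 h2.
  have := dist_trans (X5 hb hq) (dist_trans h1 h2).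
  by apply: dist_monoN; exact: bound_helper.
case: (wk_head hk) => [[wu [hwu eu]]|hout].
  have [q [wq [hq hd]]] := X3 he hop hwu eu.
  exact: fin hq hd (IHin' wu hwu eu).
have hou : out (~~ sg) u /\ (if ~~ sg then bh && ~~ sg else bl && sg).
  case: hout => [[h1 h2]|[h1 h2]].
    have hs : sg = true by move: h1 => /andP [].
    split; first by rewrite hs.
    by move: h1; rewrite hs => h.
  have hs : sg = false by move: h1 => /andP [_]; case: (sg).
  split; first by rewrite hs.
  by move: h1; rewrite hs => h.
have [q1 [w1 [q2 [w2 [hb1 hb2 hd]]]]] := X4 he hop hou.1.
apply: fin hb1 hd (IHout' (~~ sg) hou.2 _ q2 w2 hb2).
move=> /wk_head [h|[[h1 _]|[h1 _]]]; first exact: hou.1.1 h.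
  by rewrite -andbA andbN andbF in h1.
by rewrite -andbA andbN andbF in h1.
Qed.

End Claim.

Lemma final (x' : 'cV[R]_n1) (y' : 'cV[R]_n2) (z : 'cV[R]_n2) (dPA dBbar : nat) :
  is_vertex PR (col_mx x' y') -> is_vertex PA x' -> inZ z ->
  (a *m x') 0 0 + (b *m z) 0 0 = cc ->
  diam_le PA dPA -> mat_diam_le (col_mx b B) dBbar ->
  dist_le PR (dPA + 2 * D + dBbar + 2) (col_mx x y) (col_mx x' y').
Proof.
move=> hxy' hx' hz hze hdPA hdB.
have hd := hdPA x x' Hx hx'.
have hQ : forall u, region true true u.
  move=> u; case: (classic (bandv ((a *m u) 0 0))) => hb; first by left.
  right; case: (ltgtP ((a *m u) 0 0) ((a *m x) 0 0)) => h.
  - by left; split=> //; split.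
  - by right; split=> //; split.
  - by exfalso; apply: hb; rewrite h; exact: band_t.
have hw := wk_of_dist hd hQ.
have [hc _] := claim hz hze hw.
have hy : (a *m x) 0 0 + (b *m y) 0 0 = cc by have /PR_col [] := Hxy.1.
have d1 := hc y inZy hy.
have hzv : is_vertex (YP ((a *m x') 0 0)) z.
  have [z1 z2 z3] := hz.
  apply: kernel_vertex; first by apply/YP_iff; split=> //; lra.
  move=> e /YP_ker [eb eB] se; apply: Yind => // j yj.
  by apply: se; exact: z3.
have hyv : is_vertex (YP ((a *m x') 0 0)) y'.
  have /PR_col [y1 y2 y3 y4 y5] := hxy'.1.
  apply: kernel_vertex; first by apply/YP_iff; split=> //; lra.
  move=> e /YP_ker [eb eB] se.
  have h0 : (a *m (0 : 'cV[R]_n1)) 0 0 + (b *m e) 0 0 = 0 by rewrite sc0 eb addr0.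
  have hs : forall i, x' i 0 = 0 -> (0 : 'cV[R]_n1) i 0 = 0 by move=> i _; rewrite mx0E.
  by have [] := RK' hxy' (mulmx0 _ _) h0 eB hs se.
have d2 := hdB _ _ _ hzv hyv.
have d3 := dist_lift (f := fun v => col_mx x' v) (fun v u => YEdge hx') d2.
have := dist_trans d1 d3.
by apply: dist_monoN; rewrite /= ?addn0; lia.
Qed.

End Main.

Unset Implicit Arguments.

Theorem lemma5 (R : realFieldType) (m1 n1 m2 n2 : nat)
  (A : 'M[R]_(m1, n1)) (a : 'rV[R]_n1) (b : 'rV[R]_n2) (B : 'M[R]_(m2, n2))
  (cA : 'cV[R]_m1) (cB : 'cV[R]_m2) (ca cb : R)
  (Ha : a != 0) (Hb : b != 0)
  (Hsimple : std_nondegenerate (RM A a b B) (Rr cA cB ca cb))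
  (x x' : 'cV[R]_n1) (y y' : 'cV[R]_n2)
  (Hxy : x_vertex A a b B cA cB ca cb x y)
  (Hxy' : x_vertex A a b B cA cB ca cb x' y')
  (Hband : in_band b B cB ca cb y ((a *m x') 0 0))
  (dPA dAbar dBbar : nat)
  (HdPA : diam_le (polyhedron A cA) dPA)
  (HdAbar : mat_diam_le (col_mx A a) dAbar)
  (HdBbar : mat_diam_le (col_mx b B) dBbar) :
  dist_le (polyhedron (RM A a b B) (Rr cA cB ca cb))
    (dPA + 2 * dAbar + dBbar + 2)%N (col_mx x y) (col_mx x' y').
Proof.
move: Hxy Hxy' Hband => [Hxy1 Hx] [Hxy1' Hx'] [z [zB z0 zs ze]].
have hz : inZ B cB y z.
  split=> // j yj.
  case: (eqVneq (z j 0) 0) => // hne.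
  by move: (zs j hne); rewrite yj eqxx.
have hze : (a *m x') 0 0 + (b *m z) 0 0 = ca + cb by rewrite ze; ring.
exact: (final Hxy1 Hx HdAbar Hxy1' Hx' hz hze HdPA HdBbar).
Qed.
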